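(* Consider any run of Algorithm 1 (described in the context) under the standing assumption. The number of unsuccessful iterations that occur before an $(\epsilon_g,\epsilon_H)$-stationary point is reached is either zero or else satisfies \[ |\mathcal{U}|\ \le\ \Big\lfloor 1+\log_{\gamma_1}\Big(\tfrac{3(1-\eta)}{L_H\delta_{\max}}\Big)+\log_{\gamma_1}(\epsilon_H)\Big\rfloor\,|\mathcal{S}|. \]
   Context: Let $f:\mathbb{R}^n\to\mathbb{R}$ with gradient $g=\nabla f$ and Hessian $H=\nabla^2 f$; $\|\cdot\|$ is the Euclidean norm and $\lambda_{\min}(\cdot)$ the smallest eigenvalue of a symmetric matrix. A point $x$ is $(\epsilon_g,\epsilon_H)$-stationary if $\|g(x)\|\le\epsilon_g$ and $\lambda_{\min}(H(x))\ge-\epsilon_H$. Write $f_k=f(x_k)$, $g_k=g(x_k)$, $H_k=H(x_k)$ and $m_k(x):=f_k+g_k^T(x-x_k)+\tfrac12(x-x_k)^TH_k(x-x_k)$. Algorithm 1 (exact trust-region Newton method). Inputs: tolerances $\epsilon_g,\epsilon_H>0$; parameters $\gamma_1\in(0,1)$, $\gamma_2\in[1,\infty)$, $\psi\in(1/\gamma_2,1]$; $x_0\in\mathbb{R}^n$; $\delta_0>0$; $\delta_{\max}\ge\delta_0$; $\eta\in(0,1)$. For $k=0,1,2,\dots$: evaluate $g_k,H_k$; if $\|g_k\|\le\epsilon_g$, compute $\lambda_k=\lambda_{\min}(H_k)$ and, if $\lambda_k\ge-\epsilon_H$, return $x_k$ (terminate). Otherwise compute $s_k$ as a global solution of $\min_{s}\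 m_k(x_k+s)+\tfrac12\epsilon_H\|s\|^2$ subject to $\|s\|\le\delta_k$. Set $\rho_k=\frac{f_k-f(x_k+s_k)}{m_k(x_k)-m_k(x_k+s_k)}$. If $\rho_k\ge\eta$: $x_{k+1}=x_k+s_k$, and $\delta_{k+1}=\min\{\gamma_2\delta_k,\delta_{\max}\}$ if $\|s_k\|\ge\psi\delta_k$, else $\delta_{k+1}=\delta_k$. If $\rho_k<\eta$: $x_{k+1}=x_k$ and $\delta_{k+1}=\gamma_1\|s_k\|$. $\mathcal{K}$ is the set of indices $k$ such that iteration $k$ is completed without termination; $\mathcal{S}=\{k\in\mathcal{K}:\rho_k\ge\eta\}$ (successful), $\mathcal{U}=\{k\in\mathcal{K}:\rho_k<\eta\}$ (unsuccessful). Standing assumption: the sequence $\{f_k\}$ is bounded below by some $f_{\rm low}\in\mathbb{R}$, and all segments $[x_k,x_k+s_k]$ lie in an open set on which $f$ is twice continuously differentiable with gradient Lipschitz continuous with constant $L_g>0$ and Hessian Lipschitz continuous with constant $L_H>0$. *)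

(* Defs.v *)
From HB Require Import structures.
From mathcomp Require Import all_boot all_order all_algebra.
From mathcomp Require Import all_classical all_reals all_analysis.
Set Implicit Arguments. Unset Strict Implicit. Unset Printing Implicit Defensive.
Import Order.TTheory GRing.Theory Num.Theory.
Import numFieldNormedType.Exports.
Local Open Scope classical_set_scope.
Local Open Scope ring_scope.

Section TR.
Variables (R : realType) (n : nat).
Notation vec := 'cV[R]_n.
Notation mat := 'M[R]_n.

Definition dotp (u v : vec) : R := \sum_(i < n) u i 0 * v i 0.
Definition enorm (v : vec) : R := Num.sqrt (dotp v v).

Definition lambda_min (A : mat) : R := inf [set a : R | eigenvalue A a].

Definition tr_logb (b y : R) : R := ln y / ln b.

Definition tr_model (f : vec -> R) (g : vec -> vec) (H : vec -> mat) (xk x : vec) : R :=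
  f xk + dotp (g xk) (x - xk) + 2^-1 * dotp (x - xk) (H xk *m (x - xk)).

(* (eps_g, eps_H)-stationarity: the termination test of Algorithm 1 *)
Definition stationary (g : vec -> vec) (H : vec -> mat) (eg eH : R) (x : vec) : Prop :=
  enorm (g x) <= eg /\ - eH <= lambda_min (H x).

Definition smooth_on (f : vec -> R) (g : vec -> vec) (H : vec -> mat)
    (O : set vec) (Lg LH : R) : Prop :=
  open O /\
  (forall x, O x -> differentiable f x /\ forall h, 'd f x h = dotp (g x) h) /\
  (forall x, O x -> differentiable g x /\ forall h, 'd g x h = H x *m h) /\
  {in O, continuous H} /\
  (forall x y, O x -> O y -> enorm (g x - g y) <= Lg * enorm (x - y)) /\
  (forall x y, O x -> O y -> forall v,
     enorm ((H x - H y) *m v) <= LH * enorm (x - y) * enorm v).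

Definition tr_segment (a b : vec) : set vec :=
  [set z | exists t : R, 0 <= t <= 1 /\ z = a + t *: (b - a)].

Definition tr_ratio (f : vec -> R) g H (xk sk : vec) : R :=
  (f xk - f (xk + sk)) / (tr_model f g H xk xk - tr_model f g H xk (xk + sk)).

(* Iteration k is tr_completed (k \in K): no termination at iterations 0..k. *)
Definition tr_completed g H eg eH (x : nat -> vec) (k : nat) : Prop :=
  forall j, (j <= k)%N -> ~ stationary g H eg eH (x j).

(* Iterate x_k is actually produced by the run: iterations 0..k-1 tr_completed. *)
Definition tr_reached g H eg eH (x : nat -> vec) (k : nat) : Prop :=
  forall j, (j < k)%N -> ~ stationary g H eg eH (x j).

(* A run of Algorithm 1 (the exact trust-region Newton method), described by
   the sequences x_k, delta_k, s_k (values beyond termination are irrelevant),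
   together with the tr_standing assumption. *)
Definition TR_run (f : vec -> R) (g : vec -> vec) (H : vec -> mat)
    (eg eH g1 g2 psi d0 dmax eta : R)
    (x : nat -> vec) (delta : nat -> R) (s : nat -> vec) : Prop :=
  0 < eg /\ 0 < eH /\ 0 < g1 < 1 /\ 1 <= g2 /\ g2^-1 < psi <= 1 /\
  0 < d0 /\ d0 <= dmax /\ 0 < eta < 1 /\
  delta 0%N = d0 /\
  (forall k, tr_completed g H eg eH x k ->
     (enorm (s k) <= delta k /\
      forall t, enorm t <= delta k ->
        tr_model f g H (x k) (x k + s k) + 2^-1 * eH * enorm (s k) ^+ 2
        <= tr_model f g H (x k) (x k + t) + 2^-1 * eH * enorm t ^+ 2) /\
     (eta <= tr_ratio f g H (x k) (s k) ->
        x k.+1 = x k + s k /\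
        delta k.+1 = (if psi * delta k <= enorm (s k)
                      then Num.min (g2 * delta k) dmax else delta k)) /\
     (tr_ratio f g H (x k) (s k) < eta ->
        x k.+1 = x k /\ delta k.+1 = g1 * enorm (s k))).

Definition tr_standing (f : vec -> R) g H (eg eH : R) (x : nat -> vec) (s : nat -> vec)
    (Lg LH : R) : Prop :=
  0 < Lg /\ 0 < LH /\
  (exists flow : R, forall k, tr_reached g H eg eH x k -> flow <= f (x k)) /\
  exists O : set vec, smooth_on f g H O Lg LH /\
    forall k, tr_completed g H eg eH x k -> tr_segment (x k) (x k + s k) `<=` O.

Definition has_card (P : nat -> Prop) (m : nat) : Prop :=
  exists l : seq nat, uniq l /\ (forall k, k \in l <-> P k) /\ size l = m.
End TR.

(* Main.v *)
Require Import Defs.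
From HB Require Import structures.
From mathcomp Require Import all_boot all_order all_algebra.
From mathcomp Require Import all_classical all_reals all_analysis.
Import Order.TTheory GRing.Theory Num.Theory.
Local Open Scope ring_scope.
From mathcomp Require Import ring lra.

Module Helpers.
Import numFieldNormedType.Exports.
Local Open Scope classical_set_scope.
Local Open Scope ring_scope.
Set Implicit Arguments. Unset Strict Implicit.

Section Dot.
Variables (R : realType) (n : nat).
Notation vec := 'cV[R]_n.
Implicit Types u v w : vec.

Lemma dotpC u v : dotp u v = dotp v u.
Proof. by rewrite /dotp; apply: eq_bigr => i _; rewrite mulrC. Qed.

Lemma dotpDl u v w : dotp (u + v) w = dotp u w + dotp v w.
Proof. by rewrite /dotp -big_split; apply: eq_bigr => i _; rewrite mxE mulrDl. Qed.

Lemma dotpZl a u w : dotp (a *: u) w = a * dotp u w.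
Proof. by rewrite /dotp mulr_sumr; apply: eq_bigr => i _; rewrite mxE mulrA. Qed.

Lemma dotpNl u w : dotp (- u) w = - dotp u w.
Proof. by rewrite -scaleN1r dotpZl mulN1r. Qed.

Lemma dotpBl u v w : dotp (u - v) w = dotp u w - dotp v w.
Proof. by rewrite dotpDl dotpNl. Qed.

Lemma dotpDr u v w : dotp w (u + v) = dotp w u + dotp w v.
Proof. by rewrite dotpC dotpDl !(dotpC w). Qed.
Lemma dotpZr a u w : dotp w (a *: u) = a * dotp w u.
Proof. by rewrite dotpC dotpZl dotpC. Qed.
Lemma dotpBr u v w : dotp w (u - v) = dotp w u - dotp w v.
Proof. by rewrite dotpC dotpBl !(dotpC w). Qed.
Lemma dotpNr u w : dotp w (- u) = - dotp w u.
Proof. by rewrite dotpC dotpNl dotpC. Qed.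
Lemma dotp0l w : dotp 0 w = 0.
Proof. by rewrite -(scale0r 0) dotpZl mul0r. Qed.
Lemma dotp0r w : dotp w 0 = 0.
Proof. by rewrite dotpC dotp0l. Qed.

Lemma dotpvv_ge0 v : 0 <= dotp v v.
Proof. by rewrite /dotp sumr_ge0 // => i _; rewrite -expr2 sqr_ge0. Qed.

Lemma dotpvv_eq0 v : dotp v v = 0 -> v = 0.
Proof.
move=> /eqP; rewrite /dotp psumr_eq0 => [/allP H|i _]; last by rewrite -expr2 sqr_ge0.
apply/matrixP => i j; rewrite ord1 mxE.
have := H i (mem_index_enum i); rewrite -expr2 sqrf_eq0 => /eqP //.
Qed.

Lemma enorm_ge0 v : 0 <= enorm v.
Proof. exact: sqrtr_ge0. Qed.

Lemma enorm_sq v : enorm v ^+ 2 = dotp v v.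
Proof. by rewrite /enorm sqr_sqrtr // dotpvv_ge0. Qed.

Lemma enormZ a v : enorm (a *: v) = `|a| * enorm v.
Proof.
rewrite /enorm dotpZl dotpZr mulrA -expr2 sqrtrM ?sqr_ge0 //.
by rewrite sqrtr_sqr.
Qed.

Lemma enorm0 : enorm (0 : vec) = 0.
Proof. by rewrite /enorm dotp0l sqrtr0. Qed.

Lemma enorm_eq0 v : enorm v = 0 -> v = 0.
Proof. by move=> h; apply: dotpvv_eq0; rewrite -enorm_sq h expr0n. Qed.

Lemma CS u v : `|dotp u v| <= enorm u * enorm v.
Proof.
set a := dotp u u; set b := dotp u v; set c := dotp v v.
have ha : 0 <= a := dotpvv_ge0 u. have hc : 0 <= c := dotpvv_ge0 v.
suff hb : b ^+ 2 <= a * c.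
  rewrite /enorm -sqrtrM // -(sqrtr_sqr b) ler_sqrt //; rewrite mulr_ge0 //.
have [a0|a0] := eqVneq a 0.
  have u0 : u = 0 by apply: dotpvv_eq0.
  by rewrite /b u0 dotp0l expr0n /= mulr_ge0.
have apos : 0 < a by rewrite lt_def a0 ha.
have := dotpvv_ge0 (a *: v - b *: u).
rewrite !(dotpBl, dotpBr, dotpZl, dotpZr) -/a -/c (dotpC v u) -/b => h.
have h2 : 0 <= a * (a * c - b ^+ 2) by nra.
by rewrite -subr_ge0; move: h2; rewrite pmulr_rge0.
Qed.

End Dot.

Section Der.
Variable R : realType.

Lemma is_derive_ext (V W : normedModType R) (F G : V -> W) x v d :
  is_derive x v F d -> (forall w, F w = G w) -> is_derive x v G d.
Proof. by move=> h e; have -> : G = F by apply/funext => w; rewrite e. Qed.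

Lemma is_derive_line (V W : normedModType R) (F : V -> W) (x s : V) (t : R) d :
  is_derive (x + t *: s) s F d -> is_derive t 1 (fun u : R => F (x + u *: s)) d.
Proof.
case=> Hd Hv.
have E : (fun h : R => h^-1 *: (((fun u : R => F (x + u *: s)) \o shift t) (h *: 1)
            - F (x + t *: s))) =
         (fun h : R => h^-1 *: ((F \o shift (x + t *: s)) (h *: s) - F (x + t *: s))).
  apply/funext => h /=; congr (_ *: (F _ - _)).
  by rewrite scalerDl [h *: 1]mulr1 addrCA addrA.
apply: DeriveDef.
  by rewrite /derivable E.
by rewrite /derive E.
Qed.

Lemma is_derive_mulc (V : normedModType R) (F : V -> R) x v d c :
  is_derive x v F d -> is_derive x v (fun w => F w * c) (d * c).
Proof.
move=> h; have h2 := is_deriveZ c h.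
have h3 : is_derive x v (fun w => F w * c) (c *: d).
  apply: (@is_derive_ext _ _ (c \*: F)) => // w /=.
  by rewrite mulrC.
by apply: (is_derive_eq h3); rewrite mulrC.
Qed.

End Der.

Section Poly.
Variable R : realType.
Lemma is_derive_cubic (F : R -> R) (t d a b c e : R) :
  is_derive t 1 F d ->
  is_derive t 1 (fun u => F u - a - b * u - c * (u * u) - e * (u * u * u))
    (d - b - c * (2 * t) - e * (3 * (t * t))).
Proof.
move=> hF.
have hid : is_derive t 1 (@id R) 1 by exact: is_derive_id.
have h2 := is_deriveM hid hid.
have h3 := is_deriveM h2 hid.
have hb := is_derive_mulc b hid.
have hc := is_derive_mulc c h2.
have he := is_derive_mulc e h3.
have ha := @is_derive_cst R R R a t 1.
have hall := is_deriveB (is_deriveB (is_deriveB (is_deriveB hF ha) hb) hc) he.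
eapply is_derive_eq.
  eapply is_derive_ext; first exact: hall.
  move=> w /=; rewrite !fctE /=; ring.
have sE : forall x y : R, x *: y = x * y by [].
by rewrite /= !fctE /= !sE; ring.
Qed.
End Poly.

Lemma isd_derivable (R : realType) (V W : normedModType R) (F : V -> W) x v d :
  is_derive x v F d -> derivable F x v.
Proof. by case. Qed.

Section Taylor.
Variables (R : realType) (n : nat).
Notation vec := 'cV[R]_n.

Lemma taylor3 (f : vec -> R) g H O Lg LH (x s : vec) :
  smooth_on f g H O Lg LH -> tr_segment x (x + s) `<=` O ->
  f (x + s) <= f x + dotp (g x) s + 2^-1 * dotp s (H x *m s) + LH / 6 * enorm s ^+ 3.
Proof.
case=> _ [Hf [Hg [_ [_ HL]]]] seg.
pose y := fun t : R => x + t *: s.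
have Oy : forall t : R, 0 <= t <= 1 -> O (y t).
  move=> t t01; apply: seg; exists t; split => //.
  by rewrite /y addrAC subrr add0r.
pose phi := fun t => f (x + t *: s).
pose phi1 := fun t => dotp (g (x + t *: s)) s.
pose q := fun t => dotp (H (x + t *: s) *m s) s.
have D1 : forall t : R, 0 <= t <= 1 -> is_derive t 1 phi (phi1 t).
  move=> t ht; have Oyt := Oy t ht; apply: (@is_derive_line _ _ _ f).
  have [df dfe] := Hf _ Oyt.
  apply: DeriveDef; first exact: diff_derivable.
  by rewrite deriveE // dfe.
have D2 : forall t : R, 0 <= t <= 1 -> is_derive t 1 phi1 (q t).
  move=> t ht; have Oyt := Oy t ht; apply: (@is_derive_line _ _ _ (fun v => dotp (g v) s)).
  have [dg dge] := Hg _ Oyt.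
  have dgs : derivable g (y t) s := diff_derivable dg.
  have hcoord i : is_derive (y t) s (fun v => g v i 0) ((H (y t) *m s) i 0).
    apply: DeriveDef; first by move/derivable_mxP: dgs; apply.
    have := derive_mx dgs; rewrite deriveE // dge => /(congr1 (fun M : 'cV[R]_n => M i 0)).
    by move=> ->; rewrite mxE.
  have hs := is_derive_sum (fun i => is_derive_mulc (s i 0) (hcoord i)).
  eapply is_derive_ext; first exact: hs.
  by move=> w; rewrite fct_sumE.
pose K := LH * enorm s ^+ 3 / 6.
pose q0 := q 0. pose p10 := phi1 0.
pose dpsi := fun u => phi1 u - p10 - q0 * u - (3 * K) * (u * u) - 0 * (u * u * u).
pose ddpsi := fun u => q u - q0 - (3 * K) * (2 * u) - 0 * (3 * (u * u)).
pose psi := fun u => phi u - phi 0 - p10 * u - (q0 / 2) * (u * u) - K * (u * u * u).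
have Dd : forall t : R, 0 <= t <= 1 -> is_derive t 1 dpsi (ddpsi t).
  by move=> t ht; apply: is_derive_cubic; apply: D2.
have Dp : forall t : R, 0 <= t <= 1 -> is_derive t 1 psi (dpsi t).
  move=> t ht; apply: is_derive_eq; first by apply: is_derive_cubic; apply: D1.
  by rewrite /dpsi; field.
have qb : forall t : R, 0 <= t <= 1 -> ddpsi t <= 0.
  move=> t ht; have O0 : O (y 0) by apply: Oy; rewrite lexx ler01.
  have h1 : q t - q0 <= LH * enorm s ^+ 3 * t.
    have -> : q t - q0 = dotp ((H (y t) - H (y 0)) *m s) s.
      by rewrite /q0 /q mulmxBl dotpBl.
    set M := (H (y t) - H (y 0)) *m s.
    have e1 := ler_norm (dotp M s).
    have e2 := CS M s.
    have e3 := HL _ _ (Oy t ht) O0 s.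
    have e4 : enorm (y t - y 0) = t * enorm s.
      have -> : y t - y 0 = t *: s by rewrite /y scale0r addr0 addrC addKr.
      by rewrite enormZ ger0_norm //; case/andP: ht.
    rewrite e4 in e3.
    have e5 := enorm_ge0 s.
    have e6 : enorm M * enorm s <= LH * (t * enorm s) * enorm s * enorm s.
      by apply: ler_wpM2r.
    have -> : LH * enorm s ^+ 3 * t = LH * (t * enorm s) * enorm s * enorm s by ring.
    by apply: le_trans e1 (le_trans e2 e6).
  rewrite /ddpsi /K; lra.
have inI : forall a b t : R, 0 <= a -> b <= 1 -> t \in `]a, b[ -> 0 <= t <= 1.
  move=> a b t ha hb; rewrite in_itv /= => /andP[h1 h2]; apply/andP; split; lra.
have inC : forall a b t : R, 0 <= a -> b <= 1 -> t \in `[a, b] -> 0 <= t <= 1.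
  move=> a b t ha hb; rewrite in_itv /= => /andP[h1 h2]; apply/andP; split; lra.
have step1 : forall t : R, 0 <= t <= 1 -> dpsi t <= 0.
  move=> t ht; case/andP: (ht) => t0 t1.
  have [c hc E] := @MVT_segment _ dpsi ddpsi 0 t t0
    (fun u hu => Dd u (inI _ _ _ (lexx 0) t1 hu))
    (derivable_within_continuous (fun u hu => isd_derivable (Dd u (inC _ _ _ (lexx 0) t1 hu)))).
  have d0 : dpsi 0 = 0 by rewrite /dpsi /p10; ring.
  have := qb c (inC _ _ _ (lexx 0) t1 hc).
  move: E; rewrite d0 subr0 subr0 => ->; nra.
have [c hc E] := @MVT_segment _ psi dpsi 0 1 ler01
    (fun u hu => Dp u (inI _ _ _ (lexx 0) (lexx 1) hu))
    (derivable_within_continuous (fun u hu => isd_derivable (Dp u (inC _ _ _ (lexx 0) (lexx 1) hu)))).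
have := step1 c (inC _ _ _ (lexx 0) (lexx 1) hc).
move: E; rewrite /psi /phi /p10 /phi1 /q0 /q /K !scale1r !scale0r !addr0 subr0 mulr1.
rewrite [dotp s (H x *m s)]dotpC => E h; lra.
Qed.
End Taylor.

Section Iter.
Variables (R : realType) (n : nat).
Notation vec := 'cV[R]_n.

Lemma model_eq (f : vec -> R) g H xk t :
  tr_model f g H xk (xk + t) = f xk + dotp (g xk) t + 2^-1 * dotp t (H xk *m t).
Proof. by rewrite /tr_model [xk + t - xk]addrAC subrr add0r. Qed.

Lemma model_at (f : vec -> R) g H xk : tr_model f g H xk xk = f xk.
Proof. by rewrite /tr_model subrr dotp0r dotp0l mulr0 !addr0. Qed.

Lemma dotp_mx (u v : vec) : dotp u v = (u^T *m v) 0 0.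
Proof. by rewrite /dotp mxE; apply: eq_bigr => i _; rewrite mxE. Qed.

Lemma quad_pos (t0 A B : R) : 0 < t0 ->
  (forall t, 0 < t <= t0 -> 0 <= t * A + t ^+ 2 * B) -> 0 <= A.
Proof.
move=> t0p h; rewrite leNgt; apply/negP => An.
pose t := Num.min t0 (- A / (`|B| + 1)).
have hB : 0 < `|B| + 1 by rewrite ltr_pwDr // normr_ge0.
have tp : 0 < t by rewrite lt_min t0p divr_gt0 // oppr_gt0.
have tt0 : t <= t0 by rewrite ge_min lexx.
have tA : t <= - A / (`|B| + 1) by rewrite ge_min lexx orbT.
have tA' : t * (`|B| + 1) <= - A by rewrite -ler_pdivlMr.
have bB := ler_norm B.
have := h t; rewrite tp tt0 => /(_ isT) hh.
have e : t * A + t ^+ 2 * B <= - t ^+ 2.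
  have : t ^+ 2 * B <= t ^+ 2 * `|B| by rewrite ler_wpM2l // sqr_ge0.
  nra.
have : 0 < t ^+ 2 by rewrite exprn_gt0.
lra.
Qed.

Lemma s_neq0 (f : vec -> R) g H eg eH (xk sk : vec) dk :
  0 < eg -> 0 < eH -> 0 < dk -> ~ stationary g H eg eH xk ->
  (forall t, enorm t <= dk ->
     tr_model f g H xk (xk + sk) + 2^-1 * eH * enorm sk ^+ 2
     <= tr_model f g H xk (xk + t) + 2^-1 * eH * enorm t ^+ 2) -> sk <> 0.
Proof.
move=> egp eHp dkp nst opt sk0; apply: nst.
have key : forall v : vec, forall t, 0 < t <= dk / (enorm v + 1) ->
    0 <= t * dotp (g xk) v + t ^+ 2 * (2^-1 * (dotp v (H xk *m v) + eH * dotp v v)).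
  move=> v t /andP[tp tle].
  have hv := enorm_ge0 v.
  have : enorm (t *: v) <= dk.
    rewrite enormZ ger0_norm ?ltW //.
    rewrite ler_pdivlMr ?ltr_pwDr // in tle.
    nra.
  move/opt; rewrite sk0 addr0 model_at enorm0 expr0n /= mulr0 addr0 model_eq.
  rewrite enorm_sq dotpZl dotpZr dotpZl -scalemxAr dotpZr dotpZr.
  move=> h; rewrite -subr_ge0; move: h; rewrite -subr_ge0.
  by congr (0 <= _); ring.
have dpos : forall v : vec, 0 < dk / (enorm v + 1).
  by move=> v; rewrite divr_gt0 // ltr_pwDr // enorm_ge0.
have A0 : forall v : vec, 0 <= dotp (g xk) v.
  by move=> v; apply: (quad_pos (dpos v)) => t ht; apply: key.
have g0 : g xk = 0.
  apply: dotpvv_eq0; have := A0 (- g xk); rewrite dotpNr.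
  have := dotpvv_ge0 (g xk); lra.
have B0 : forall v : vec, 0 <= dotp v (H xk *m v) + eH * dotp v v.
  move=> v; have := key v (dk / (enorm v + 1)).
  rewrite dpos lexx g0 dotp0l mulr0 add0r => /(_ isT).
  rewrite pmulr_rge0 ?exprn_gt0 // pmulr_rge0 //.
split; first by rewrite g0 enorm0 ltW.
rewrite /lambda_min.
have [ne|em] := pselect (nonempty [set a : R | eigenvalue (H xk) a]); last first.
  have -> : [set a : R | eigenvalue (H xk) a] = set0.
    by apply/seteqP; split => a //= ha; apply: em; exists a.
  by rewrite inf0 oppr_le0 ltW.
apply: lb_le_inf => // a /= /eigenvalueP [u uH u0].
have := B0 u^T.
have -> : dotp u^T (H xk *m u^T) = a * dotp u^T u^T.
  by rewrite !dotp_mx trmxK mulmxA uH -scalemxAl mxE.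
have vp : 0 < dotp u^T u^T.
  rewrite lt_def dotpvv_ge0 andbT; apply/eqP => /dotpvv_eq0 /eqP.
  by rewrite trmx_eq0; apply/negP.
rewrite -mulrDl pmulr_lge0 //; lra.
Qed.

Lemma success (f : vec -> R) g H O Lg LH eH eta (xk sk : vec) dk :
  smooth_on f g H O Lg LH -> tr_segment xk (xk + sk) `<=` O ->
  0 < eH -> 0 < LH -> 0 < eta < 1 -> sk <> 0 -> enorm sk <= dk ->
  (forall t, enorm t <= dk ->
     tr_model f g H xk (xk + sk) + 2^-1 * eH * enorm sk ^+ 2
     <= tr_model f g H xk (xk + t) + 2^-1 * eH * enorm t ^+ 2) ->
  dk <= 3 * (1 - eta) * eH / LH ->
  eta <= tr_ratio f g H xk sk.
Proof.
move=> sm seg eHp LHp /andP[e0 e1] s0 sdk opt dkc.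
have T := taylor3 sm seg.
have hd0 : 0 <= dk by apply: le_trans sdk; apply: enorm_ge0.
have dec := opt 0; rewrite enorm0 addr0 model_at expr0n /= mulr0 addr0 in dec.
have := dec hd0 => {}dec.
rewrite model_eq in dec.
rewrite /tr_ratio model_at model_eq.
set e := enorm sk in dec T *.
have ep : 0 < e.
  rewrite lt_def enorm_ge0 andbT; apply/eqP => /enorm_eq0; exact: s0.
set m := f xk + dotp (g xk) sk + 2^-1 * dotp sk (H xk *m sk) in dec T *.
have Dp : 0 < f xk - m.
  have : 0 < 2^-1 * eH * e ^+ 2 by rewrite !mulr_gt0 ?exprn_gt0 ?invr_gt0.
  lra.
rewrite ler_pdivlMr //.
have ec : LH * e <= 3 * (1 - eta) * eH.
  by rewrite mulrC -ler_pdivlMr //; apply: le_trans dkc.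
have h1 : 0 <= (3 * (1 - eta) * eH - LH * e) * e ^+ 2 by rewrite mulr_ge0 ?subr_ge0 ?sqr_ge0.
have h2 : 0 <= (1 - eta) * (f xk - m - 2^-1 * eH * e ^+ 2) by rewrite mulr_ge0 ?subr_ge0 //; lra.
have e3 : e ^+ 3 = e * e ^+ 2 by rewrite exprS.
nra.
Qed.
End Iter.

Lemma log_bound (R : realType) (g1 eta LH dmax eH : R) (j : nat) :
  0 < g1 < 1 -> 0 < eta < 1 -> 0 < LH -> 0 < dmax -> 0 < eH ->
  3 * (1 - eta) * eH / LH < g1 ^+ j * dmax ->
  (j.+1)%:Z <= Num.floor (1 + tr_logb g1 (3 * (1 - eta) / (LH * dmax)) + tr_logb g1 eH).
Proof.
move=> /andP[g0 g1l] /andP[e0 e1] LHp dp eHp hc.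
rewrite floor_ge_int.
change ((j.+1)%:R <= 1 + tr_logb g1 (3 * (1 - eta) / (LH * dmax)) + tr_logb g1 eH).
rewrite /tr_logb -addrA -mulrDl -lnM ?posrE; last first.
- by [].
- by rewrite divr_gt0 ?mulr_gt0 //; lra.
set X := ln _.
have L0 : ln g1 < 0 by apply: ln_lt0; rewrite g0 g1l.
have hX : X < j%:R * ln g1.
  rewrite mulr_natl -lnXn // /X ltr_ln ?posrE ?exprn_gt0 //; last first.
    by rewrite !mulr_gt0 ?invr_gt0 ?mulr_gt0 ?subr_gt0.
  have hc' : 3 * (1 - eta) * eH / LH / dmax < g1 ^+ j by rewrite ltr_pdivrMr.
  apply: le_lt_trans hc'; rewrite le_eqVlt; apply/orP; left; apply/eqP.
  by field; rewrite ?gt_eqF.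
have YL : X / ln g1 * ln g1 = X by rewrite divfK // lt_eqF.
rewrite -natr1.
nra.
Qed.

Fixpoint runlen (P : nat -> bool) (k : nat) : nat :=
  match k with 0 => 0 | k'.+1 => if P k' then (runlen P k').+1 else 0 end.

Lemma runlen_ge (P : nat -> bool) K m :
  (forall j, (K <= j < K + m)%N -> P j) -> (m <= runlen P (K + m))%N.
Proof.
elim: m => [|m IH] h //=.
rewrite addnS /= h; last by apply/andP; split; [rewrite leq_addr | rewrite addnS ltnS].
rewrite ltnS; apply: IH => j /andP[h1 h2]; apply: h; rewrite h1 /=.
by rewrite addnS ltnS ltnW.
Qed.


End Helpers.
Import Helpers.
Unset Implicit Arguments.

Theorem lemma2p5 (R : realType) (n : nat)
    (f : 'cV[R]_n -> R) (g : 'cV[R]_n -> 'cV[R]_n) (H : 'cV[R]_n -> 'M[R]_n)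
    (eg eH g1 g2 psi d0 dmax eta Lg LH : R)
    (x : nat -> 'cV[R]_n) (delta : nat -> R) (s : nat -> 'cV[R]_n) :
  TR_run f g H eg eH g1 g2 psi d0 dmax eta x delta s ->
  tr_standing f g H eg eH x s Lg LH ->
  let U := fun k => tr_completed g H eg eH x k /\ tr_ratio f g H (x k) (s k) < eta in
  let S := fun k => tr_completed g H eg eH x k /\ eta <= tr_ratio f g H (x k) (s k) in
  has_card U 0 \/
  forall mS, has_card S mS ->
    exists mU, has_card U mU /\
      (mU%:Z <= Num.floor (1 + tr_logb g1 (3 * (1 - eta) / (LH * dmax)) + tr_logb g1 eH)
                * mS%:Z)%R.
Proof.
move=> run st U S.
case: run => eg0 [eH0 [g1b [g2_1 [psib [d00 [d0m [etb [dl0 Hit]]]]]]]].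
case/andP: g1b => g10 g11; case/andP: etb => et0 et1.
case: st => Lg0 [LH0 [_ [Oset [sm segO]]]].
set Nfl := Num.floor _.
pose C k := tr_completed g H eg eH x k.
have reachedS : forall k, tr_reached g H eg eH x k.+1 <-> C k by [].
have reachedC : forall k, C k -> tr_reached g H eg eH x k.
  by move=> k ck j hj; apply: ck; apply: ltnW.
have Cdown : forall k j, C k -> (j <= k)%N -> C j.
  by move=> k j ck hj i hi; apply: ck; apply: leq_trans hj.
have F3 : forall k, tr_reached g H eg eH x k -> 0 < delta k <= dmax.
  elim=> [|k IH] hr; first by rewrite dl0 d00 d0m.
  have ck : C k by apply/reachedS.
  have [dk0 dm] := andP (IH (reachedC _ ck)).
  have [[sdk opt] [hs hu]] := Hit k ck.
  have sk0 : s k <> 0.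
    by apply: (s_neq0 eg0 eH0 dk0 (ck k (leqnn k)) opt).
  have ep : 0 < enorm (s k).
    by rewrite lt_def enorm_ge0 andbT; apply/eqP => /enorm_eq0.
  have [h|h] := ltP (tr_ratio f g H (x k) (s k)) eta.
    have [_ ->] := hu h; apply/andP; split; first by rewrite mulr_gt0.
    by apply: le_trans dm; apply: le_trans sdk; rewrite ler_piMl ?enorm_ge0 ?ltW.
  have [_ ->] := hs h; case: ifP => _; last by rewrite dk0 dm.
  rewrite lt_min ge_min lexx orbT andbT mulr_gt0 //; lra.
set c := 3 * (1 - eta) * eH / LH.
have F4 : forall k, C k -> s k <> 0.
  move=> k ck; have [dk0 _] := andP (F3 _ (reachedC _ ck)).
  have [[sdk opt] _] := Hit k ck.
  exact: (s_neq0 eg0 eH0 dk0 (ck k (leqnn k)) opt).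
have F5 : forall k, U k -> c < delta k.
  move=> k [ck hlt]; rewrite ltNge; apply/negP => hdc.
  have [[sdk opt] _] := Hit k ck.
  have := success sm (segO k ck) eH0 LH0 (introT andP (conj et0 et1)) (F4 k ck) sdk opt hdc.
  by rewrite leNgt hlt.
have F6 : forall k, U k -> delta k.+1 <= g1 * delta k.
  move=> k [ck hlt]; have [[sdk _] [_ hu]] := Hit k ck.
  by have [_ ->] := hu hlt; rewrite ler_wpM2l // ltW.
pose PU k := `[< U k >].
pose PS k := `[< S k >].
have F7 : forall K j, tr_reached g H eg eH x K -> runlen PU K = j.+1 ->
    delta K.-1 <= g1 ^+ j * dmax.
  elim=> [|K IH] j hr //=.
  case hP: (PU K) => // -[hj].
  have uK : U K by apply/asboolP.
  have ck : C K by apply/reachedS.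
  case: j hj => [|j] hj.
    by rewrite expr0 mul1r; case/andP: (F3 _ (reachedC _ ck)).
  case: K IH hr hP uK ck hj => [|K] IH hr hP uK ck hj //=.
  have := IH j (reachedC _ ck) hj => /= h1.
  have uK' : U K.
    by move: hj => /=; case: (PU K) / asboolP => // ? _.
  apply: le_trans (F6 _ uK') _.
  by rewrite exprS -mulrA ler_wpM2l // ltW.
have dmax0 : 0 < dmax by lra.
have F8 : forall K, tr_reached g H eg eH x K -> (0 < runlen PU K)%N ->
    (runlen PU K)%:Z <= Nfl.
  move=> K hr; case E: (runlen PU K) => [|j] // _.
  have h := F7 K j hr E.
  case: K hr E h => [|K] hr //= E h.
  have uK : U K by move: E; case: (PU K) / asboolP.
  have := lt_le_trans (F5 _ uK) h => hc.
  exact: (log_bound (introT andP (conj g10 g11)) (introT andP (conj et0 et1)) LH0 dmax0 eH0 hc).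
have [[k0 Uk0]|noU] := pselect (exists k, U k); last first.
  left; exists [::]; split => //; split => // k; split => // Uk.
  by exfalso; apply: noU; exists k.
right => mS [lS [uS [memS szS]]].
have ck0 : C k0 by case: Uk0.
have N1 : (1 <= Nfl)%R.
  have hr : tr_reached g H eg eH x k0.+1 by apply/reachedS.
  have e : runlen PU k0.+1 = (runlen PU k0).+1 by rewrite /= /PU (asboolT Uk0).
  have := F8 _ hr; rewrite e => /(_ isT) h; apply: le_trans h; by rewrite lez_nat.
pose M := \max_(i <- lS) i.+1.
have Sb : forall k, S k -> (k < M)%N.
  move=> k /memS hk; exact: (@leq_bigmax_seq _ lS xpredT (fun i => i.+1) k hk isT).
pose Nn := `|Nfl|%N.
have NnE : (Nn%:Z = Nfl)%R by rewrite /Nn gez0_abs // (le_trans _ N1).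
have notreach : ~ tr_reached g H eg eH x (M + Nn.+1).
  move=> hr.
  have allU : forall j, (M <= j < M + Nn.+1)%N -> PU j.
    move=> j /andP[j1 j2]; apply/asboolP.
    have cj : C j by move=> i hi; apply: hr; apply: leq_ltn_trans hi j2.
    split => //; rewrite ltNge; apply/negP => hle.
    by have := Sb j (conj cj hle); rewrite ltnNge j1.
  have h1 := @runlen_ge PU M Nn.+1 allU.
  have h2 := F8 _ hr (leq_trans (ltn0Sn Nn) h1).
  have h3 : ((Nn.+1)%:Z <= Nfl)%R by apply: le_trans h2; rewrite lez_nat.
  by move: h3; rewrite -NnE lez_nat ltnn.
have [K [rK nrK]] : exists K, tr_reached g H eg eH x K /\ ~ tr_reached g H eg eH x K.+1.
  apply: contrapT => nK; apply: notreach.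
  suff : forall K, tr_reached g H eg eH x K by apply.
  elim=> [|K IH]; first by move=> j.
  apply: contrapT => nr; apply: nK; by exists K.
have Ciff : forall k, C k <-> (k < K)%N.
  move=> k; split.
    move=> ck; rewrite ltnNge; apply/negP => hK; apply: nrK => j hj.
    by apply: ck; apply: leq_trans hK.
  by move=> hk j hj; apply: rK; apply: leq_ltn_trans hj hk.
have runK0 : runlen PU K = 0.
  case: K rK nrK Ciff => [|K] rK nrK Ciff //=.
  case hP: (PU K) => //.
  have uK : U K by apply/asboolP.
  have ck : C K by apply/Ciff.
  have [_ [_ hu]] := Hit K ck.
  have [xe _] := hu uK.2.
  exfalso; apply: nrK => j hj.
  have [->|hne] := eqVneq j K.+1; first by rewrite xe; apply: ck.
  by apply: ck; rewrite -ltnS ltn_neqAle hne /=; exact: hj.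
have N0 : (0 <= Nfl)%R by apply: le_trans N1.
have inv : forall k, (k <= K)%N ->
    ((count PU (iota 0 k))%:Z <= Nfl * (count PS (iota 0 k))%:Z + (runlen PU k)%:Z)%R.
  elim=> [|k IH] hk; first by rewrite /= mulr0 add0r.
  have ck : C k by apply/Ciff.
  have IH' := IH (ltnW hk).
  have rN : ((runlen PU k)%:Z <= Nfl)%R.
    case E: (runlen PU k) => [|r]; first exact: N0.
    by rewrite -E; apply: F8 (reachedC _ ck) _; rewrite E.
  move: IH' rN.
  rewrite -addn1 iotaD !count_cat /= add0n addn1.
  have [h|h] := ltP (tr_ratio f g H (x k) (s k)) eta.
    have e1 : PU k = true by apply: asboolT.
    have e2 : PS k = false.
      by apply: asboolF => -[_ h']; move: h; rewrite ltNge h'.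
    rewrite /= e1 e2 /=.
    set a := count PU (iota 0 k); set b := count PS (iota 0 k); set r := runlen PU k.
    rewrite !addn0 -[r.+1]addn1 !PoszD.
    move=> h1 h2; by rewrite addrA lerD2r.
  have e1 : PU k = false.
    by apply: asboolF => -[_ h']; move: h'; rewrite ltNge h.
  have e2 : PS k = true by apply: asboolT.
  rewrite /= e1 e2 /=.
  set a := count PU (iota 0 k); set b := count PS (iota 0 k); set r := runlen PU k.
  rewrite !addn0 !PoszD.
  move=> h1 h2; rewrite addr0 mulrDr mulr1; apply: le_trans h1 _; by rewrite lerD2l.
exists (count PU (iota 0 K)); split.
  exists (seq.filter PU (iota 0 K)); split; first by rewrite filter_uniq ?iota_uniq.
  split; last by rewrite size_filter.
  move=> k; rewrite mem_filter mem_iota /= add0n; split.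
    by case/andP => /asboolP.
  move=> uk; rewrite /PU (asboolT uk) /=; apply/Ciff; by case: uk.
have szS' : size (seq.filter PS (iota 0 K)) = mS.
  rewrite -szS; apply: perm_size; apply: uniq_perm; [by rewrite filter_uniq ?iota_uniq| exact: uS|].
  move=> k; rewrite mem_filter mem_iota /= add0n; apply/idP/idP.
    by case/andP => /asboolP sk _; apply/memS.
  move/memS => sk; rewrite /PS (asboolT sk) /=; apply/Ciff; by case: sk.
have := inv K (leqnn K); rewrite runK0 addr0 -[count PS _]size_filter szS'.
done.
Qed.
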